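(* Let $A\in\mathbb{R}^{n\times n}$, $B\in\mathbb{R}^{n\times k}$ and $F\in\mathbb{R}^{k\times n}$ be fixed. For $C\in\mathbb{R}^{m\times n}$ let $\Omega(C,F)=[C;\,C(A+BF);\,\dots;\,C(A+BF)^{n-1}]$ and let $\mathcal{V}^*(C)$ be the maximal $(A,B)$-invariant subspace contained in $\operatorname{Ker}C$. Define $BR1_a=\arg\min_{C\in\mathbb{R}^{m\times n}}\dim\operatorname{Ker}\Omega(C,F)$, $BR2_a=\arg\min_{C\in BR1_a}\dim\mathcal{V}^*(C)$ and $BR2X_a=\arg\min_{C\in\mathbb{R}^{m\times n}}\dim\mathcal{V}^*(C)$. If $\dim\operatorname{Ker}\Omega(C,F)=\dim\mathcal{V}^*(C)$ for every $C\in BR1_a$, then $BR1_a=BR2_a\subseteq BR2X_a$.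
   Context: A subspace $\mathcal{V}\subseteq\mathbb{R}^n$ is $(A,B)$-invariant if there exists a matrix $F'$ with $(A+BF')\mathcal{V}\subseteq\mathcal{V}$. Among all $(A,B)$-invariant subspaces contained in $\operatorname{Ker}C$ there is a maximal one, $\mathcal{V}^*(C)$. *)

(* Defs.v *)
(* Convention: MathComp matrices act on ROW vectors, so a subspace of R^n is
   represented by a square matrix V : 'M_n whose ROW space is the subspace,
   and a vector x in R^n is a row vector; the paper's "M x" (column action)
   becomes "x *m M^T". *)
From HB Require Import structures.
From mathcomp Require Import all_boot all_order all_algebra.
From mathcomp Require Import reals.
From Stdlib Require Import ClassicalEpsilon.
Set Implicit Arguments. Unset Strict Implicit. Unset Printing Implicit Defensive.
Import Order.TTheory GRing.Theory Num.Theory.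
Local Open Scope ring_scope.

Section Defs.
Variables (R : realType) (n k : nat) (A : 'M[R]_n) (B : 'M[R]_(n, k)).

Definition Ker (m : nat) (C : 'M[R]_(m, n)) : 'M[R]_n := kermx C^T.

Definition ABinvariant (V : 'M[R]_n) : Prop :=
  exists F' : 'M[R]_(k, n), stablemx V (A + B *m F')^T.

Definition is_Vstar (m : nat) (C : 'M[R]_(m, n)) (V : 'M[R]_n) : Prop :=
  [/\ ABinvariant V, (V <= Ker C)%MS &
      forall W : 'M[R]_n, ABinvariant W -> (W <= Ker C)%MS -> (W <= V)%MS].

Definition Vstar (m : nat) (C : 'M[R]_(m, n)) : 'M[R]_n :=
  epsilon (inhabits 0) (is_Vstar C).

Definition dimVstar (m : nat) (C : 'M[R]_(m, n)) : nat := \rank (Vstar C).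

Definition Omega (m : nat) (C : 'M[R]_(m, n)) (F : 'M[R]_(k, n)) :=
  \mxcol_(i < n) (C *m (A + B *m F) ^+ i).

Definition dimKerOmega (m : nat) (C : 'M[R]_(m, n)) (F : 'M[R]_(k, n)) : nat :=
  \rank (Ker (Omega C F)).

Definition BR1a (m : nat) (F : 'M[R]_(k, n)) (C : 'M[R]_(m, n)) : Prop :=
  forall C' : 'M[R]_(m, n), (dimKerOmega C F <= dimKerOmega C' F)%N.

Definition BR2a (m : nat) (F : 'M[R]_(k, n)) (C : 'M[R]_(m, n)) : Prop :=
  BR1a F C /\ forall C' : 'M[R]_(m, n), BR1a F C' -> (dimVstar C <= dimVstar C')%N.

Definition BR2Xa (m : nat) (C : 'M[R]_(m, n)) : Prop :=
  forall C' : 'M[R]_(m, n), (dimVstar C <= dimVstar C')%N.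

End Defs.

(* Main.v *)
Require Import Defs.
From HB Require Import structures.
From mathcomp Require Import all_boot all_order all_algebra.
From mathcomp Require Import reals.
From mathcomp Require Import zify.
From Stdlib Require Import ClassicalEpsilon Classical.
Set Implicit Arguments. Unset Strict Implicit. Unset Printing Implicit Defensive.
Import Order.TTheory GRing.Theory Num.Theory.
Local Open Scope ring_scope.

Lemma horner_mx_expand (R : comNzRingType) n' (M : 'M[R]_n'.+1) (p : {poly R}) :
  horner_mx M p = \sum_(i < size p) p`_i *: M ^+ i.
Proof.
rewrite /horner_mx /horner_morph (horner_coef_wide _ (size_poly _ _)).
apply: eq_bigr => i _; rewrite coef_poly ltn_ord -mul_scalar_mx.
by [].
Qed.

Lemma CH_kill (R : fieldType) n (M : 'M[R]_n) p q (C : 'M[R]_(p, n))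
  (Y : 'M[R]_(n, q)) :
  (forall i : 'I_n, C *m M ^+ i *m Y = 0) -> C *m M ^+ n *m Y = 0.
Proof.
case: n M C Y => [|n] M C Y H; first by rewrite [Y]flatmx0 mulmx0.
have CH := Cayley_Hamilton M.
rewrite horner_mx_expand size_char_poly big_ord_recr /= in CH.
have lc : (char_poly M)`_n.+1 = 1.
  by have /monicP := char_poly_monic M; rewrite lead_coefE size_char_poly.
rewrite lc scale1r in CH.
have -> : M ^+ n.+1 = - \sum_(i < n.+1) (char_poly M)`_i *: M ^+ i.
  by apply/eqP; rewrite -subr_eq0 opprK addrC CH.
rewrite mulmxN mulNmx mulmx_sumr mulmx_suml.
rewrite big1 ?oppr0 // => i _.
by rewrite -scalemxAr -scalemxAl H scaler0.
Qed.

Section S.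
Variables (R : realType) (n k : nat) (A : 'M[R]_n) (B : 'M[R]_(n, k)).

Lemma abinvP (V : 'M[R]_n) :
  ABinvariant A B V <-> (V *m A^T <= V + B^T)%MS.
Proof.
split.
  case=> F' H.
  rewrite linearD /= trmx_mul mulmxDr in H.
  have -> : V *m A^T = (V *m A^T + V *m (F'^T *m B^T)) + (- (V *m F'^T)) *m B^T.
    by rewrite mulmxA mulNmx addrK.
  by apply: addmx_sub_adds => //; apply: submxMl.
move=> H.
set Bv := row_base V.
have H1 : (Bv *m A^T <= Bv + B^T)%MS.
  have e1 : (Bv <= V)%MS by rewrite eq_row_base.
  apply: submx_trans (submxMr _ e1) _.
  apply: submx_trans H _.
  by apply: addsmxS => //; rewrite eq_row_base.
case/sub_addsmxP: H1 => u Hu.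
case/row_freeP: (row_base_free V) => E HE.
exists (- (E *m u.2))^T.

have Hs : (Bv *m (A + B *m (- (E *m u.2))^T)^T <= Bv)%MS.
  have key : Bv *m (- (E *m u.2) *m B^T) = - (u.2 *m B^T).
    by rewrite mulNmx mulmxN (mulmxA Bv) (mulmxA Bv) HE mul1mx.
  rewrite linearD /= trmx_mul trmxK mulmxDr Hu key addrK.
  by apply: submxMl.
have eV : (V <= Bv)%MS by rewrite eq_row_base.
apply: submx_trans (submxMr _ eV) _.
by apply: submx_trans Hs _; rewrite eq_row_base.
Qed.

Lemma abinv_add (V W : 'M[R]_n) :
  ABinvariant A B V -> ABinvariant A B W -> ABinvariant A B (V + W)%MS.
Proof.
move=> /abinvP HV /abinvP HW; apply/abinvP.
rewrite (addsmxMr V W A^T).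
apply: submx_trans (addsmxS HV HW) _.
rewrite !addsmx_sub; apply/andP; split; apply/andP; split.
- by apply: submx_trans (addsmxSl V W) (addsmxSl _ _).
- exact: addsmxSr.
- by apply: submx_trans (addsmxSr V W) (addsmxSl _ _).
- exact: addsmxSr.
Qed.

Lemma abinv0 : ABinvariant A B 0.
Proof. by exists 0; rewrite mul0mx sub0mx. Qed.

Lemma exists_Vstar m (C : 'M[R]_(m, n)) : exists V, is_Vstar A B C V.
Proof.
suff: forall d (W : 'M[R]_n), (n - \rank W <= d)%N -> ABinvariant A B W ->
    (W <= Ker C)%MS -> exists V, is_Vstar A B C V.
  by move/(_ n 0); apply => //; [rewrite leq_subr | exact: abinv0 | exact: sub0mx].
elim=> [|d IH] W hd hW hK.
  case: (classic (forall W', ABinvariant A B W' -> (W' <= Ker C)%MS -> (W' <= W)%MS)) => [h|h].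
    by exists W; split.
  exfalso; apply: h => W' h1 h2; apply: contraT => h3; suff: False by [].
  have := mxrank_leqif_sup (addsmxSl W W').
  move=> [le1 eq1].
  have lt : (\rank W < \rank (W + W')%MS)%N.
    rewrite ltn_neqAle le1 andbT eq1; apply/negP => h4.
    by move/negP: h3; apply; apply: submx_trans (addsmxSr W W') h4.
  have := rank_leq_col (W + W')%MS; lia.
case: (classic (forall W', ABinvariant A B W' -> (W' <= Ker C)%MS -> (W' <= W)%MS)) => [h|h].
  by exists W; split.
have [W' [h1 [h2 h3]]] : exists W', ABinvariant A B W' /\ (W' <= Ker C)%MS /\ ~~ (W' <= W)%MS.
  apply: NNPP => hn; apply: h => W' h1 h2; apply: contraT => h3.
  by exfalso; apply: hn; exists W'.
have := mxrank_leqif_sup (addsmxSl W W').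
move=> [le1 eq1].
have lt : (\rank W < \rank (W + W')%MS)%N.
  rewrite ltn_neqAle le1 andbT eq1; apply/negP => h4.
  by move/negP: h3; apply; apply: submx_trans (addsmxSr W W') h4.
apply: (IH (W + W')%MS).
- have := rank_leq_col (W + W')%MS; lia.
- exact: abinv_add.
- by rewrite addsmx_sub hK h2.
Qed.

Lemma Vstar_spec m (C : 'M[R]_(m, n)) : is_Vstar A B C (Vstar A B C).
Proof.
rewrite /Vstar; apply: epsilon_spec; exact: exists_Vstar.
Qed.

Variable F : 'M[R]_(k, n).
Local Notation M := (A + B *m F).

Lemma kerO m (C : 'M[R]_(m, n)) p (Y : 'M[R]_(n, p)) :
  (Y^T <= Ker (Omega A B C F))%MS <-> forall i : 'I_n, C *m M ^+ i *m Y = 0.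
Proof.
rewrite /Ker sub_kermx -trmx_mul trmx_eq0 /Omega mxcol_mul.
split.
  move/eqP => h i; have := congr1 (fun X => submxcol X i) h.
  by rewrite mxcolK submxcol0.
move=> h; apply/eqP; rewrite -(mxcol0 (p_ := fun _ : 'I_n => m)).
by apply/eq_mxcolP => i; apply: h.
Qed.

Lemma kerOmega_le m (C : 'M[R]_(m, n)) :
  (dimKerOmega A B C F <= dimVstar A B C)%N.
Proof.
rewrite /dimKerOmega /dimVstar; apply: mxrankS.
have [_ _ hmax] := Vstar_spec C.
set K := Ker (Omega A B C F).
have hK : forall i : 'I_n, C *m M ^+ i *m K^T = 0.
  by apply/kerO; rewrite trmxK submx_refl.
apply: hmax.
  exists F.
  have -> : K *m M^T = (M *m K^T)^T by rewrite trmx_mul trmxK.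
  apply/kerO => i.
  have -> : C *m M ^+ i *m (M *m K^T) = C *m M ^+ i.+1 *m K^T.
    by rewrite exprSr -mulmxE !mulmxA.
  case: (ltnP i.+1 n) => hi; first exact: (hK (Ordinal hi)).
  have -> : i.+1 = n by apply/eqP; rewrite eqn_leq hi ltn_ord.
  exact: CH_kill.
case: (posnP n) => [n0|npos].
  have -> : K = 0.
    by apply/matrixP => i j; have := ltn_ord i; rewrite {2}n0.
  exact: sub0mx.
rewrite /Ker sub_kermx -[K]trmxK -trmx_mul trmx_eq0.
by have := hK (Ordinal npos); rewrite /= expr0 mulmx1 => ->.
Qed.

End S.

Theorem lemma5 (R : realType) (n k m : nat)
  (A : 'M[R]_n) (B : 'M[R]_(n, k)) (F : 'M[R]_(k, n)) :
  (forall C : 'M[R]_(m, n), BR1a A B F C ->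
     dimKerOmega A B C F = dimVstar A B C) ->
  (forall C : 'M[R]_(m, n), BR1a A B F C <-> BR2a A B F C) /\
  (forall C : 'M[R]_(m, n), BR2a A B F C -> BR2Xa A B C).
Proof.
move=> H; split.
  move=> C; split; last by case.
  move=> h1; split => // C' h1'.
  by rewrite -(H C h1) -(H C' h1'); apply: h1.
move=> C [h1 _] C'.
rewrite -(H C h1).
apply: leq_trans (h1 C') _; exact: (kerOmega_le A B F C').
Qed.
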